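(* Fix positive integers $t\leqslant m\leqslant n$, let $X$ be an $m\times n$ matrix of indeterminates over a field $\mathbb{F}$ of prime characteristic, $R=\mathbb{F}[X]$, and $I_t$ the ideal generated by the $t\times t$ minors of $X$. Then for every integer $k$ with $0\leqslant k\leqslant t-1$, \[ \operatorname{fpt}(I_t)\ \leqslant\ \frac{(m-k)(n-k)}{t-k}. \]
   Context: Let $R$ be a polynomial ring over a field of characteristic $p>0$ with homogeneous maximal ideal $\mathfrak{m}$. For $q=p^e$, $\mathfrak{m}^{[q]}$ denotes the ideal generated by the $q$-th powers of the variables. For a homogeneous proper ideal $I$, $\nu_I(q)=\max\{r\in\mathbb{N} : I^r\not\subseteq \mathfrak{m}^{[q]}\}$, and $\operatorname{fpt}(I)=\lim_{e\to\infty}\nu_I(p^e)/p^e$ (the $F$-pure threshold). *)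

(* Defs.v *)
From HB Require Import structures.
From mathcomp Require Import all_boot all_order all_algebra.
From mathcomp Require Import mpoly.
From mathcomp Require Import all_classical all_reals all_analysis.

Set Implicit Arguments.
Unset Strict Implicit.
Unset Printing Implicit Defensive.

Import Order.TTheory GRing.Theory Num.Theory.
Import numFieldNormedType.Exports.
Local Open Scope ring_scope.
Local Open Scope classical_set_scope.

Definition in_ideal (A : comNzRingType) (S : A -> Prop) (f : A) : Prop :=
  exists (cs gs : seq A),
    size cs = size gs /\ (forall g, g \in gs -> S g) /\
    f = \sum_(i < size gs) cs`_i * gs`_i.

Definition pow_gens (A : comNzRingType) (S : A -> Prop) (r : nat) (f : A) : Prop :=
  exists hs : seq A,
    size hs = r /\ (forall h, h \in hs -> in_ideal S h) /\ f = \prod_(h <- hs) h.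

Definition in_ideal_pow (A : comNzRingType) (S : A -> Prop) (r : nat) (f : A) : Prop :=
  in_ideal (pow_gens S r) f.

Definition ideal_sub (A : comNzRingType) (S T : A -> Prop) : Prop :=
  forall f, in_ideal S f -> in_ideal T f.

Definition var (N : nat) (F : fieldType) (i : 'I_N) : mpoly.mpoly N F :=
  mpoly.mpolyX F (mpoly.mnm1 i).

(* generators of the Frobenius power m^[q] of the homogeneous maximal ideal *)
Definition frob_max_gens (N : nat) (F : fieldType) (q : nat)
    (f : mpoly.mpoly N F) : Prop :=
  exists i : 'I_N, f = @var N F i ^+ q.

Definition nu (R : realType) (N : nat) (F : fieldType)
    (S : mpoly.mpoly N F -> Prop) (q : nat) : R :=
  sup [set (r%:R : R) | r in
        [set r : nat | ~ ideal_sub (pow_gens S r) (@frob_max_gens N F q)]].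

Definition fpt (R : realType) (N : nat) (F : fieldType) (p : nat)
    (S : mpoly.mpoly N F -> Prop) : R :=
  limn (fun e : nat => (nu R S (p ^ e) / (p ^ e)%:R : R)).

Definition genmx (F : fieldType) (m n : nat) : 'M[mpoly.mpoly (m * n) F]_(m, n) :=
  \matrix_(i < m, j < n) @var (m * n) F (mxvec_index i j).

Definition minors_gens (F : fieldType) (m n t : nat)
    (f : mpoly.mpoly (m * n) F) : Prop :=
  exists (rs : 'I_t -> 'I_m) (cs : 'I_t -> 'I_n),
    injective rs /\ injective cs /\ f = \det (mxsub rs cs (genmx F m n)).

(* Main.v *)
Set Warnings "-all".
Require Import Defs.
From HB Require Import structures.
From mathcomp Require Import all_boot all_order all_algebra.
From mathcomp Require Import mpoly.
From mathcomp Require Import all_classical all_reals all_analysis.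
From mathcomp Require Import perm.
Import Order.TTheory GRing.Theory Num.Theory.
Import numFieldNormedType.Exports.
Local Open Scope ring_scope.
Set Implicit Arguments.
Unset Strict Implicit.
Unset Printing Implicit Defensive.
Section Ideals.
Variable A : comNzRingType.
Implicit Types (S T U : A -> Prop) (f g : A).

Definition II S f := exists l : seq (A * A),
  (forall x, x \in l -> S x.2) /\ f = \sum_(x <- l) x.1 * x.2.

Lemma in_idealE S f : in_ideal S f <-> II S f.
Proof.
split.
- move=> [cs [gs [hs [hS ->]]]]; exists (zip cs gs); split.
    move=> x xz; apply: hS; have := map_f (@snd A A) xz; by rewrite -/(unzip2 (zip cs gs)) unzip2_zip ?hs.
  rewrite (big_nth (0,0)) big_mkord size_zip hs minnn.
  by apply: eq_bigr => i _; rewrite nth_zip.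
- move=> [l [hS ->]]; exists (unzip1 l), (unzip2 l); split; first by rewrite !size_map.
  split; first by move=> g /mapP [x xl ->]; apply: hS.
  rewrite (big_nth (0,0)) big_mkord size_map.
  by apply: eq_bigr => i _; rewrite !(nth_map (0,0)).
Qed.

Lemma II0 S : II S 0.
Proof. by exists [::]; split => //; rewrite big_nil. Qed.

Lemma II_gen S g : S g -> II S g.
Proof. by move=> Sg; exists [:: (1, g)]; split; [move=> x; rewrite inE => /eqP -> | rewrite big_seq1 mul1r]. Qed.

Lemma IID S f g : II S f -> II S g -> II S (f + g).
Proof.
move=> [l1 [h1 ->]] [l2 [h2 ->]]; exists (l1 ++ l2); split; last by rewrite big_cat.
by move=> x; rewrite mem_cat => /orP [] ?; [apply: h1 | apply: h2].
Qed.

Lemma IIM S c f : II S f -> II S (c * f).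
Proof.
move=> [l [h ->]]; exists [seq (c * x.1, x.2) | x <- l]; split.
  by move=> x /mapP [y yl ->]; exact: (h _ yl).
by rewrite big_map mulr_sumr; apply: eq_bigr => x _; rewrite mulrA.
Qed.

Lemma IIMr S c f : II S f -> II S (f * c).
Proof. by rewrite mulrC; apply: IIM. Qed.

Lemma IIN S f : II S f -> II S (- f).
Proof. by move=> h; rewrite -mulN1r; apply: IIM. Qed.

Lemma II_sum S (I : eqType) (r : seq I) (F : I -> A) :
  (forall i, i \in r -> II S (F i)) -> II S (\sum_(i <- r) F i).
Proof.
elim: r => [|a r IH] h; first by rewrite big_nil; apply: II0.
rewrite big_cons; apply: IID; first by apply: h; rewrite inE eqxx.
by apply: IH => i ir; apply: h; rewrite inE ir orbT.
Qed.

Lemma II_sumf S (I : finType) (P : pred I) (F : I -> A) :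
  (forall i, P i -> II S (F i)) -> II S (\sum_(i | P i) F i).
Proof.
move=> h; rewrite big_mkcond /=; apply: II_sum => i _.
by case: ifP => Pi; [apply: h | apply: II0].
Qed.

Lemma II_trans S T f : II S f -> (forall g, S g -> II T g) -> II T f.
Proof.
move=> [l [h ->]] hST; apply: II_sum => x xl; apply: IIM; apply: hST; exact: h.
Qed.

Lemma II_scale S T d f : II S f -> (forall g, S g -> II T (d * g)) -> II T (d * f).
Proof.
move=> [l [h ->]] hST; rewrite mulr_sumr; apply: II_sum => x xl.
by rewrite mulrCA; apply: IIM; apply: hST; exact: h.
Qed.

Lemma II_mul S T U f g : II S f -> II T g ->
  (forall x y, S x -> T y -> II U (x * y)) -> II U (f * g).
Proof.
move=> [l1 [h1 ->]] [l2 [h2 ->]] hU; rewrite mulr_suml; apply: II_sum => x xl.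
rewrite mulr_sumr; apply: II_sum => y yl.
rewrite mulrACA; apply: IIM; apply: hU; [exact: h1 | exact: h2].
Qed.

End Ideals.
Section Frob.
Variables (R : comNzRingType) (p : nat) (hp : p \in [pchar R]).

Lemma frobD e (x y : R) : (x + y) ^+ (p ^ e) = x ^+ (p ^ e) + y ^+ (p ^ e).
Proof.
elim: e => [|e IH]; first by rewrite expn0 !expr1.
rewrite expnSr !exprM IH.
have := pFrobenius_autD_comm hp (mulrC (x ^+ (p ^ e)) (y ^+ (p ^ e))).
by rewrite !pFrobenius_autE.
Qed.

Lemma frob_sum e (I : Type) (r : seq I) (G : I -> R) :
  (\sum_(i <- r) G i) ^+ (p ^ e) = \sum_(i <- r) G i ^+ (p ^ e).
Proof.
have p0 : (0 < p)%N by apply: prime_gt0; exact: pcharf_prime hp.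
elim: r => [|x r IH]; first by rewrite !big_nil expr0n expn_eq0 (negbTE (lt0n_neq0 p0)).
by rewrite !big_cons frobD IH.
Qed.

Lemma frobN e (x : R) : (- x) ^+ (p ^ e) = - x ^+ (p ^ e).
Proof.
have p0 : (0 < p)%N by apply: prime_gt0; exact: pcharf_prime hp.
apply/eqP; rewrite -subr_eq0 opprK -frobD addNr expr0n expn_eq0.
by rewrite (negbTE (lt0n_neq0 p0)).
Qed.
End Frob.

Section Poly.
Variables (N : nat) (F : fieldType) (p : nat) (hp : p \in [pchar F]) (e : nat).
Local Notation q := (p ^ e)%N.
Local Notation RR := {mpoly F[N]}.

Lemma q_gt0 : (0 < q)%N.
Proof. by rewrite expn_gt0 prime_gt0 // (pcharf_prime hp). Qed.

Definition frq (c : F) := c ^+ q.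
Lemma frq_is_additive : additive frq.
Proof. by move=> x y; rewrite /frq frobD // frobN. Qed.
Lemma frq_is_multiplicative : multiplicative frq.
Proof. by split; [move=> x y; rewrite /frq exprMn | rewrite /frq expr1n]. Qed.

Lemma hpR : p \in [pchar RR].
Proof. exact: (rmorph_pchar (mpolyC N (R := F))). Qed.

Lemma msupp_sum_sub (V : lmodType F) (G : 'X_{1..N} -> V) (g : RR) s :
  uniq s -> {subset msupp g <= s} ->
  \sum_(m <- msupp g) g@_m *: G m = \sum_(m <- s) g@_m *: G m.
Proof.
move=> us sub; rewrite [RHS](bigID (fun m => m \in msupp g)) /=.
rewrite [X in _ = _ + X]big1 ?addr0; last first.
  by move=> m /memN_msupp_eq0 ->; rewrite scale0r.
rewrite -[RHS]big_filter.
have pe : perm_eq (msupp g) [seq x <- s | x \in msupp g].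
  apply: uniq_perm; [exact: msupp_uniq | exact: filter_uniq |].
  by move=> m; rewrite mem_filter; case mg: (m \in msupp g) => //=; rewrite sub.
by rewrite (perm_big _ pe).
Qed.

Lemma coef_sum_ind (g : RR) a :
  \sum_(m <- msupp g) g@_m * (m == a)%:R = g@_a.
Proof.
case ag: (a \in msupp g).
  rewrite (bigD1_seq a) ?msupp_uniq //= eqxx mulr1 big1 ?addr0 //.
  by move=> m /negbTE ->; rewrite mulr0.
rewrite big1_seq; last first.
  by move=> m /andP [_ mg]; case: eqP mg ag => [-> -> //|_ _ _]; rewrite mulr0.
by rewrite memN_msupp_eq0 // ag.
Qed.

Section Ta.
Variable a : 'X_{1..N}.
Hypothesis ha : forall i, (a i < q)%N.

Definition tst (m : 'X_{1..N}) := [forall i, (a i <= m i)%N && (q %| m i - a i)%N].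
Definition dq (m : 'X_{1..N}) : 'X_{1..N} := [multinom ((m i - a i) %/ q)%N | i < N].
Definition tX (m : 'X_{1..N}) : RR := if tst m then 'X_[dq m] else 0.
Definition Ta (g : RR) : RR := \sum_(m <- msupp g) g@_m *: tX m.

Lemma TaD g h : Ta (g + h) = Ta g + Ta h.
Proof.
pose s := undup (msupp g ++ msupp h).
have us : uniq s by apply: undup_uniq.
have s1 : {subset msupp g <= s} by move=> m mg; rewrite mem_undup mem_cat mg.
have s2 : {subset msupp h <= s} by move=> m mh; rewrite mem_undup mem_cat mh orbT.
have s3 : {subset msupp (g + h) <= s} by move=> m /msuppD_le; rewrite mem_undup.
rewrite /Ta (msupp_sum_sub _ us s1) (msupp_sum_sub _ us s2) (msupp_sum_sub _ us s3).
by rewrite -big_split; apply: eq_bigr => m _; rewrite mcoeffD scalerDl.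
Qed.

Lemma TaZ c g : Ta (c *: g) = c *: Ta g.
Proof.
rewrite /Ta (@msupp_sum_sub _ _ _ (msupp g)) ?msupp_uniq //; last exact: msuppZ_le.
by rewrite scaler_sumr; apply: eq_bigr => m _; rewrite mcoeffZ scalerA.
Qed.

Lemma Ta_is_linear : linear Ta.
Proof. by move=> c g h; rewrite TaD TaZ. Qed.
HB.instance Definition _ := GRing.isLinear.Build F RR RR _ Ta Ta_is_linear.

Lemma TaX m : Ta 'X_[m] = tX m.
Proof. by rewrite /Ta msuppX big_seq1 mcoeffX eqxx scale1r. Qed.

Lemma nat_tst (x b ai : nat) : (ai < q)%N ->
  ((ai <= x + b * q) && (q %| x + b * q - ai))%N = ((ai <= x) && (q %| x - ai))%N.
Proof.
move=> haq; case: (leqP ai x) => hx.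
  by rewrite (leq_trans hx (leq_addr _ _)) /= -addnBAC // dvdn_addl // dvdn_mull.
apply/negbTE/negP => /andP [h1 /dvdnP [c hc]].
have : ((x + b * q) %% q = (c * q + ai) %% q)%N by rewrite -hc subnK.
rewrite [(x + _)%N]addnC !modnMDl !modn_small //; last exact: (ltn_trans hx).
by move=> exa; rewrite exa ltnn in hx.
Qed.

Lemma tstS m b : tst (m + b *+ q)%MM = tst m.
Proof.
apply/forallP/forallP => h i; have := h i; by rewrite mnmDE mulmnE nat_tst.
Qed.

Lemma dqS m b : tst m -> dq (m + b *+ q)%MM = (dq m + b)%MM.
Proof.
move=> /forallP h; apply/mnmP => i; rewrite /dq mnmE !mnmDE mnmE mulmnE.
have /andP [h1 _] := h i.
by rewrite -addnBAC // divnDr ?dvdn_mull // mulnK // q_gt0.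
Qed.

Lemma tXS m b : tX (m + b *+ q)%MM = 'X_[b] * tX m.
Proof.
rewrite /tX tstS; case: ifP => t; last by rewrite mulr0.
by rewrite dqS // mpolyXD mulrC.
Qed.

Lemma TaXq b g : Ta ('X_[b *+ q] * g) = 'X_[b] * Ta g.
Proof.
rewrite {1}(mpolyE g) mulr_sumr linear_sum /= [Ta g]/Ta mulr_sumr.
apply: eq_bigr => m _; rewrite -scalerAr -mpolyXD linearZ /= TaX addmC tXS.
by rewrite scalerAr.
Qed.

Lemma mpoly_frob (w : RR) :
  w ^+ q = \sum_(m <- msupp w) (frq w@_m) *: 'X_[m *+ q].
Proof.
rewrite {1}(mpolyE w) (frob_sum hpR); apply: eq_bigr => m _.
by rewrite exprZn mpolyXn.
Qed.

Lemma map_frqE (w : RR) :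
  map_mpoly frq w = \sum_(m <- msupp w) (frq w@_m) *: 'X_[m].
Proof.
rewrite /map_mpoly /mmap; apply: eq_bigr => m _.
by rewrite mmap1_id mul_mpolyC.
Qed.

Lemma TaFq (w g : RR) : Ta (w ^+ q * g) = map_mpoly frq w * Ta g.
Proof.
rewrite mpoly_frob map_frqE !mulr_suml linear_sum; apply: eq_bigr => m _.
by rewrite -!scalerAl linearZ /= TaXq.
Qed.

Lemma tst_a : tst a.
Proof. by apply/forallP => i; rewrite leqnn subnn dvdn0. Qed.

Lemma tX0 m : (tX m)@_0 = (m == a)%:R.
Proof.
rewrite /tX; case: ifP => t; last first.
  by rewrite mcoeff0; case: eqP t => // ->; rewrite tst_a.
rewrite mcoeffX; suff -> : (dq m == 0%MM) = (m == a) by []; move/forallP: t => t.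
apply/eqP/eqP => [h|->]; apply/mnmP => i.
  have /andP [h1 h2] := t i; have := congr1 (fun u : 'X_{1..N} => u i) h.
  rewrite /dq mnmE mnm0E => hd.
  by move/divnK: h2; rewrite hd mul0n => /esym/eqP; rewrite subn_eq0 => h3; apply/eqP; rewrite eqn_leq h3 h1.
by rewrite /dq mnmE subnn div0n mnm0E.
Qed.

Lemma Ta0 f : (Ta f)@_0 = f@_a.
Proof.
rewrite /Ta (raddf_sum (mcoeff 0%MM)) -coef_sum_ind; apply: eq_bigr => m _.
by rewrite /= mcoeffZ tX0.
Qed.

End Ta.

Lemma frob_ideal (f : RR) :
  (forall b : 'X_{1..N}, (forall i, b i < q)%N -> f@_b = 0) ->
  II (@frob_max_gens N F q) f.
Proof.
move=> hf; rewrite (mpolyE f); apply: II_sum => m mf.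
have : ~~ [forall i, (m i < q)%N].
  apply/negP => /forallP h; move: mf; by rewrite mcoeff_msupp hf ?eqxx.
rewrite negb_forall => /existsP [i]; rewrite -leqNgt => hi.
have le : (U_(i) *+ q <= m)%MM.
  apply/mnm_lepP => j; rewrite mulmnE mnm1E.
  by case: eqP => [<-|_]; rewrite ?mul1n ?mul0n.
have -> : 'X_[m] = 'X_[m - U_(i) *+ q] * 'X_i ^+ q :> {mpoly F[N]}.
  by rewrite mpolyXn -mpolyXD submK.
rewrite scalerAl.
apply: IIM; apply: II_gen; rewrite /frob_max_gens; by exists i.
Qed.

End Poly.

Section Psi.
Variables (N : nat) (F : fieldType) (v : 'I_N -> {poly F}).
Hypothesis hv : forall i, (v i).[0] = 0.

Definition Psi0 (g : {mpoly F[N]}) : {poly F} := mmap (@polyC F) v g.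

Lemma Psi0_0 g : (Psi0 g).[0] = g@_0.
Proof.
rewrite /Psi0 /mmap horner_sum -coef_sum_ind; apply: eq_bigr => m _.
rewrite hornerM hornerC /mmap1 horner_prod; congr (_ * _).
case: eqP => [->|/eqP nz].
  by rewrite big1 // => i _; rewrite mnm0E expr0 hornerC.
have : exists i, m i != 0%N.
  apply/existsP; move: nz; apply: contraR; rewrite negb_exists => /forallP h.
  by apply/eqP/mnmP => i; rewrite mnm0E; have := h i; rewrite negbK => /eqP.
move=> [i hi]; rewrite (bigD1 i) //= horner_exp hv expr0n (negbTE hi) mul0r.
by [].
Qed.
End Psi.


Section DetSplit.
Variables (R : comNzRingType) (t : nat).

Definition mixm (f : {ffun 'I_t -> bool}) (A E : 'M[R]_t) : 'M[R]_t :=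
  \matrix_(i, j) if f i then E i j else A i j.

Lemma det_split (A E : 'M[R]_t) :
  \det (A + E) = \sum_(f : {ffun 'I_t -> bool}) \det (mixm f A E).
Proof.
have h (s : {perm 'I_t}) : \prod_i (A + E) i (s i) =
    \sum_(f : {ffun 'I_t -> bool}) \prod_i mixm f A E i (s i).
  rewrite (eq_bigr (fun i => \sum_(b : bool) (if b then E i (s i) else A i (s i)))); last first.
    by move=> i _; rewrite big_bool /= mxE addrC.
  rewrite bigA_distr_bigA; apply: eq_bigr => f _; apply: eq_bigr => i _.
  by rewrite mxE.
rewrite /determinant (eq_bigr (fun s : {perm 'I_t} => \sum_(f : {ffun 'I_t -> bool})
   (-1) ^+ s * \prod_i mixm f A E i (s i))); last first.
  by move=> s _; rewrite h mulr_sumr.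
by rewrite exchange_big.
Qed.
End DetSplit.

Lemma rank_sum (K : fieldType) (a b : nat) (I : Type) (r : seq I) (G : I -> 'M[K]_(a, b)) :
  (\rank (\sum_(i <- r) G i)%R <= \sum_(i <- r) \rank (G i))%N.
Proof.
elim: r => [|x r IH]; first by rewrite !big_nil mxrank0.
rewrite !big_cons; apply: leq_trans (mxrank_add _ _) _; exact: leq_add.
Qed.

Lemma det_mix_lowrank (K : fieldType) (t k : nat) (f : {ffun 'I_t -> bool})
    (E : 'M[K]_t) (P : 'M[K]_(t, k)) (Q : 'M[K]_(k, t)) :
  (\sum_i (f i : nat) + k < t)%N -> \det (mixm f (P *m Q) E) = 0.
Proof.
move=> hlt.
pose D1 : 'M[K]_t := diag_mx (\row_i (f i)%:R).
pose D2 : 'M[K]_t := diag_mx (\row_i (~~ f i)%:R).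
have eM : mixm f (P *m Q) E = D1 *m E + D2 *m P *m Q.
  apply/matrixP => i j; rewrite -mulmxA !mul_diag_mx !mxE.
  by case: (f i); rewrite /= ?mul1r ?mul0r ?addr0 ?add0r.
have rD1 : (\rank D1 <= \sum_i (f i : nat))%N.
  rewrite /D1 diag_mx_sum_delta; apply: leq_trans (rank_sum _ _) _.
  apply: leq_sum => i _; rewrite mxE.
  by case: (f i); rewrite ?scale1r ?scale0r ?mxrank0 ?mxrank_delta.
have rM : (\rank (mixm f (P *m Q) E) < t)%N.
  rewrite eM; apply: leq_ltn_trans (mxrank_add _ _) _.
  apply: leq_ltn_trans hlt; apply: leq_add.
    exact: leq_trans (mxrankM_maxl _ _) rD1.
  exact: mulmx_max_rank.
apply/eqP; apply: contraLR rM => h; rewrite -leqNgt.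
have : row_free (mixm f (P *m Q) E) by rewrite row_free_unit unitmxE unitfE.
by rewrite /row_free => /eqP ->.
Qed.

Lemma size_count (T : finType) (l : seq T) : size l = (\sum_(x : T) count_mem x l)%N.
Proof.
elim: l => [|y l IH]; first by rewrite big1.
rewrite /= big_split /= -IH (bigD1 y) //= eqxx big1 ?addn0 ?add1n //.
by move=> x /negbTE; rewrite eq_sym => ->.
Qed.

Lemma sum_ge (a k : nat) : (\sum_(i < a) (k <= i : nat) = a - k)%N.
Proof.
elim: a => [|a IH]; first by rewrite big_ord0.
rewrite big_ord_recr /= IH; case: (leqP k a) => h.
  by rewrite addn1 subSn.
by rewrite addn0 (eqP (ltnW h)) ; move: h; rewrite -subn_eq0 => /eqP ->.
Qed.

Lemma iter_mulr (R : nzRingType) (x : R) c : iter c (GRing.mul x) 1 = x ^+ c.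
Proof. by elim: c => [|c IH] //=; rewrite IH exprS. Qed.

Section Mat.
Variables (F : fieldType) (m n k : nat) (hkm : (k <= m)%N) (hkn : (k <= n)%N).
Local Notation RR := {mpoly F[m * n]}.
Local Notation Xg := (@Defs.genmx F m n).

Definition wm (a : 'I_k) : 'I_m := widen_ord hkm a.
Definition wn (a : 'I_k) : 'I_n := widen_ord hkn a.
Definition Bm : 'M[RR]_k := \matrix_(a, b) Xg (wm a) (wn b).
Definition dl : RR := \det Bm.
Definition Qm : 'M[RR]_(k, n) := \matrix_(a, j) Xg (wm a) j.
Definition rowk (i : 'I_m) : 'rV[RR]_k := \row_b Xg i (wn b).
Definition Pm : 'M[RR]_(m, k) :=
  \matrix_(i, b) if (i < k)%N then dl *+ (i == b :> nat) else (rowk i *m \adj Bm) 0 b.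
Definition Em : 'M[RR]_(m, n) := dl *: Xg - Pm *m Qm.

Lemma EmE : dl *: Xg = Pm *m Qm + Em.
Proof. by rewrite /Em addrC subrK. Qed.

Lemma Em0 (i : 'I_m) (j : 'I_n) : ~~ ((k <= i)%N && (k <= j)%N) -> Em i j = 0.
Proof.
move=> hij; apply/eqP; rewrite /Em !mxE subr_eq0; apply/eqP.
case: (ltnP i k) => hi.
  rewrite (bigD1 (Ordinal hi)) //= big1 ?addr0; last first.
    move=> b hb; rewrite !mxE hi; case: eqP => [h|_]; last by rewrite mulr0n mul0r.
    by case/eqP: hb; apply: val_inj; rewrite /= h.
  have ew : wm (Ordinal hi) = i by apply: val_inj.
  by rewrite !mxE hi eqxx mulr1n ew.
have hj : (j < k)%N by move: hij; rewrite hi /= -ltnNge.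
pose j0 := Ordinal hj.
have -> : \sum_b Pm i b * Qm b j = ((rowk i *m \adj Bm) *m Bm) 0 j0.
  have ew : wn j0 = j by apply: val_inj.
  rewrite [RHS]mxE; apply: eq_bigr => b _.
  by rewrite /Pm /Qm /Bm !mxE ltnNge hi /= ew.
have ew : wn j0 = j by apply: val_inj.
by rewrite -mulmxA mul_adj_mx mul_mx_scalar !mxE ew.
Qed.

Section Morph.
Variables (S : comNzRingType) (Psi : {rmorphism RR -> S}).
Hypothesis hPsi : forall (i : 'I_m) (j : 'I_n), (k <= i)%N -> Psi (var F (mxvec_index i j)) = 0.

Lemma Psi_Em (i : 'I_m) (j : 'I_n) : (k <= i)%N -> Psi (Em i j) = 0.
Proof.
move=> hi; rewrite /Em !mxE rmorphB rmorphM hPsi // mulr0 sub0r rmorph_sum.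
rewrite big1 ?oppr0 // => b _; rewrite rmorphM !mxE ltnNge hi /= rmorph_sum big1 ?mul0r //.
by move=> c _; rewrite !mxE rmorphM hPsi // mul0r.
Qed.

Lemma Psi_dl (z : S) : (forall a b : 'I_k, Psi (var F (mxvec_index (wm a) (wn b))) = z *+ (a == b)) ->
  Psi dl = z ^+ k.
Proof.
move=> hz; rewrite /dl -det_map_mx.
have -> : map_mx Psi Bm = z%:M by apply/matrixP => a b; rewrite !mxE hz.
by rewrite det_scalar.
Qed.
End Morph.


Definition blk (x : 'I_m * 'I_n) := ((k <= x.1) && (k <= x.2))%N.
Definition MonGen (s : nat) (g : RR) := exists l : seq ('I_m * 'I_n),
  all blk l /\ (s <= size l)%N /\ g = \prod_(x <- l) Em x.1 x.2.
Local Notation Good s := (II (MonGen s)).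

Lemma Good0 u : Good 0 u.
Proof.
rewrite -[u]mulr1; apply: IIM; apply: II_gen; exists [::]; split => //.
by rewrite big_nil.
Qed.

Lemma Good_le s s' u : (s' <= s)%N -> Good s u -> Good s' u.
Proof.
move=> hs hu; apply: (II_trans hu) => g [l [h1 [h2 h3]]]; apply: II_gen.
by exists l; split => //; split => //; apply: leq_trans h2.
Qed.

Lemma Good_mulM s s' u v : Good s u -> Good s' v -> Good (s + s') (u * v).
Proof.
move=> hu hv; apply: (II_mul hu hv) => x y [l1 [a1 [b1 c1]]] [l2 [a2 [b2 c2]]].
apply: II_gen; exists (l1 ++ l2); split; first by rewrite all_cat a1 a2.
by split; [rewrite size_cat leq_add | rewrite big_cat c1 c2].
Qed.

Lemma Good_Em i j : Good 1 (Em i j).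
Proof.
case hb: (blk (i, j)).
  by apply: II_gen; exists [:: (i, j)]; rewrite /= hb big_seq1.
rewrite Em0; first exact: II0.
by move: hb; rewrite /blk /= => ->.
Qed.

Lemma Good_prodf (I : finType) (G : I -> RR) (w : I -> nat) :
  (forall i, Good (w i) (G i)) -> Good (\sum_i w i) (\prod_i G i).
Proof.
move=> hG; apply: (big_rec2 (fun s u => Good s u)); first exact: Good0.
by move=> i y1 y2 _ h; apply: Good_mulM.
Qed.

Lemma Good_det t (f : {ffun 'I_t -> bool}) (A E : 'M[RR]_t) :
  (forall i j, Good 1 (E i j)) -> Good (\sum_i (f i : nat)) (\det (mixm f A E)).
Proof.
move=> hE; rewrite /determinant; apply: II_sumf => s _; apply: IIM.
apply: Good_prodf => i; rewrite mxE; case: (f i) => //=; exact: Good0.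
Qed.

Lemma Good_minor t (rs : 'I_t -> 'I_m) (cs : 'I_t -> 'I_n) :
  Good (t - k) (dl ^+ t * \det (mxsub rs cs Xg)).
Proof.
rewrite -detZ.
have -> : dl *: mxsub rs cs Xg = rowsub rs Pm *m colsub cs Qm + mxsub rs cs Em.
  rewrite -mxsub_mul.
  have -> : dl *: mxsub rs cs Xg = mxsub rs cs (dl *: Xg) by apply/matrixP => a b; rewrite !mxE.
  by rewrite EmE; apply/matrixP => a b; rewrite !mxE.
rewrite det_split; apply: II_sumf => f _.
case: (ltnP (\sum_i (f i : nat) + k) t) => hf.
  have -> : \det (mixm f (rowsub rs Pm *m colsub cs Qm) (mxsub rs cs Em)) = 0.
    apply/eqP; rewrite -(tofrac_eq0 (R := RR)); apply/eqP; rewrite -det_map_mx.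
    set P' := map_mx (@tofrac RR) (rowsub rs Pm).
    set Q' := map_mx (@tofrac RR) (colsub cs Qm).
    set E' := map_mx (@tofrac RR) (mxsub rs cs Em).
    have -> : map_mx (@tofrac RR) (mixm f (rowsub rs Pm *m colsub cs Qm) (mxsub rs cs Em))
        = mixm f (P' *m Q') E'.
      rewrite /P' /Q' /E' -map_mxM; apply/matrixP => a b; rewrite !mxE.
      by case: (f a).
    exact: det_mix_lowrank.
  exact: II0.
apply: (Good_le (s := \sum_i (f i : nat))); first by rewrite leq_subLR addnC.
apply: Good_det => a b; rewrite mxE; exact: Good_Em.
Qed.

Lemma Good_minor_ideal t h : II (@minors_gens F m n t) h -> Good (t - k) (dl ^+ t * h).
Proof.
move=> hh; apply: (II_scale hh) => g [rs [cs [_ [_ ->]]]]; exact: Good_minor.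
Qed.

Lemma Good_pow t r g : pow_gens (@minors_gens F m n t) r g ->
  Good (r * (t - k)) (dl ^+ (t * r) * g).
Proof.
move=> [hs [<- [hh ->]]]; elim: hs hh => [|h hs IH] hh.
  by rewrite big_nil mul0n; apply: Good0.
rewrite big_cons /= mulnS exprD mulrACA mulSn; apply: Good_mulM.
  by apply: Good_minor_ideal; apply/in_idealE; apply: hh; rewrite inE eqxx.
by apply: IH => x xs; apply: hh; rewrite inE xs orbT.
Qed.

Lemma Good_f t r f : in_ideal (pow_gens (@minors_gens F m n t) r) f ->
  Good (r * (t - k)) (dl ^+ (t * r) * f).
Proof.
move/in_idealE => hf; apply: (II_scale hf) => g hg; exact: Good_pow.
Qed.


Definition HQ q (g : RR) := exists x, blk x /\ exists w, g = Em x.1 x.2 ^+ q * w.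

Lemma sum_blk : (\sum_(x : 'I_m * 'I_n) blk x = (m - k) * (n - k))%N.
Proof.
have -> : (\sum_(x : 'I_m * 'I_n) blk x = \sum_(i : 'I_m) \sum_(j : 'I_n) blk (i, j))%N.
  by rewrite pair_big /=; apply: eq_bigr => -[i j].
rewrite -sum_ge big_distrl /=; apply: eq_bigr => i _.
rewrite -sum_ge big_distrr /=; apply: eq_bigr => j _.
by rewrite /blk /= -mulnb.
Qed.

Lemma Good_HQ s q u : (0 < q)%N -> ((m - k) * (n - k) * (q - 1) < s)%N ->
  Good s u -> II (HQ q) u.
Proof.
move=> q0 hs hu; apply: (II_trans hu) => g [l [hall [hsl ->]]].
have [x hx] : exists x, (q <= count_mem x l)%N.
  case: (boolP [exists x, (q <= count_mem x l)%N]) => [/existsP //|].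
  rewrite negb_exists => /forallP hc; exfalso.
  have : (size l <= (m - k) * (n - k) * (q - 1))%N.
    rewrite size_count -sum_blk big_distrl /=; apply: leq_sum => x _.
    case hb: (blk x); first by rewrite mul1n -ltnS subn1 prednK // ltnNge; apply: hc.
    rewrite mul0n leqn0; apply/eqP/count_memPn; apply/negP => xl.
    by move/allP: hall => /(_ x xl); rewrite hb.
  by move=> h; move: (leq_trans hsl h); rewrite leqNgt hs.
have xl : x \in l by rewrite -has_pred1 has_count (leq_trans q0 hx).
have bx : blk x by move/allP: hall; apply.
apply: II_gen; exists x; split => //.
rewrite (bigID (fun y => y == x)) /=.
rewrite (eq_bigr (fun _ => Em x.1 x.2)); last by move=> y /eqP ->.
rewrite big_const_seq iter_mulr -(subnK hx) exprD.
eexists; by rewrite [X in X * _]mulrC -mulrA.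
Qed.

End Mat.

Section Final.
Variables (F : fieldType) (p : nat) (hp : p \in [pchar F]) (e : nat).
Variables (m n t k : nat) (hkm : (k <= m)%N) (hkn : (k <= n)%N).
Local Notation q := (p ^ e)%N.
Local Notation RR := {mpoly F[m * n]}.

Lemma frqA : additive (@frq F p e). Proof. exact: frq_is_additive hp e. Qed.
Lemma frqM : multiplicative (@frq F p e). Proof. exact: frq_is_multiplicative. Qed.
HB.instance Definition _ := GRing.isAdditive.Build F F (@frq F p e) frqA.
HB.instance Definition _ := GRing.isMultiplicative.Build F F (@frq F p e) frqM.

Definition Lmat : 'M[{poly F}]_(m, n) :=
  \matrix_(i, j) if ((i : nat) == j) && (i < k)%N then 'X else 0.
Definition vv (u : 'I_(m * n)) : {poly F} := (mxvec Lmat) 0 u.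

Lemma hvv u : (vv u).[0] = 0.
Proof.
case: (mxvec_indexP u) => i j; rewrite /vv mxvecE /Lmat mxE.
by case: ifP; rewrite ?hornerX ?horner0.
Qed.

Definition Psi2 : {rmorphism RR -> {poly F}} :=
  (mmap (@polyC F) vv) \o (map_mpoly (@frq F p e)).

Lemma Psi2_var i j : Psi2 (var F (mxvec_index i j)) = Lmat i j.
Proof.
by rewrite /Psi2 /= /var map_mpolyX mmapX mmap1U /vv mxvecE.
Qed.

Lemma Psi2_hyp (i : 'I_m) (j : 'I_n) : (k <= i)%N -> Psi2 (var F (mxvec_index i j)) = 0.
Proof. by move=> hi; rewrite Psi2_var /Lmat mxE ltnNge hi andbF. Qed.

Lemma Psi2_dl : Psi2 (dl F hkm hkn) = 'X ^+ k.
Proof.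
apply: Psi_dl => a b; rewrite Psi2_var /Lmat mxE /= ltn_ord andbT.
by case: eqP => [h|h]; case: eqP => [h'|h'] //; [case: h'; apply: val_inj | case: h; rewrite h'].
Qed.

Section A.
Variable a : 'X_{1..m * n}.
Hypothesis ha : forall i, (a i < q)%N.

Lemma K_HQ u : II (HQ hkm hkn q) u -> mmap (@polyC F) vv (Ta p e a u) = 0.
Proof.
move=> [l [hl ->]]; rewrite linear_sum /= raddf_sum; apply: big1_seq => x /andP [_ xl] /=.
have [y [hby [w ->]]] := hl x xl.
rewrite mulrCA (TaFq hp ha) rmorphM /=.
have -> : mmap (@polyC F) vv (map_mpoly (@frq F p e) (Em F hkm hkn y.1 y.2)) = 0.
  have := Psi_Em hkm hkn (Psi := Psi2) Psi2_hyp y.2 (i := y.1).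
  by move/andP: hby => [h1 _] /(_ h1).
by rewrite mul0r.
Qed.

Variable r : nat.
Hypothesis hr : ((m - k) * (n - k) * (q - 1) < r * (t - k))%N.

Lemma coef_zero f : in_ideal (pow_gens (@minors_gens F m n t) r) f -> f@_a = 0.
Proof.
move=> hf; have G := Good_f hkm hkn hf.
set d := dl F hkm hkn ^+ (t * r) in G.
have q0 : (0 < q)%N := q_gt0 hp e.
have G2 : II (MonGen hkm hkn (r * (t - k))) (d ^+ q * f).
  by rewrite -(subnK q0) exprD expr1 -mulrA; apply: IIM; exact: G.
have K := K_HQ (Good_HQ q0 hr G2).
rewrite (TaFq hp ha) rmorphM /= in K.
have ed : mmap (@polyC F) vv (map_mpoly (@frq F p e) d) = ('X ^+ k) ^+ (t * r).
  by change (Psi2 d = ('X ^+ k) ^+ (t * r)); rewrite -Psi2_dl /d rmorphXn.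
rewrite ed in K; move/eqP: K; rewrite mulf_eq0 !expf_eq0 polyX_eq0 !andbF /= => /eqP K.
by rewrite -(Ta0 p e) -(Psi0_0 hvv) /Psi0 K horner0.
Qed.
End A.

Lemma alg_main r : ((m - k) * (n - k) * (q - 1) < r * (t - k))%N ->
  ideal_sub (pow_gens (@minors_gens F m n t) r) (@frob_max_gens (m * n) F q).
Proof.
move=> hr f hf; apply/in_idealE; apply: frob_ideal => b hb.
exact: (coef_zero hb hr hf).
Qed.

End Final.

Lemma nu_bound (R : realType) (F : fieldType) (p : nat) (hp : p \in [pchar F])
    (m n t k : nat) (hkm : (k <= m)%N) (hkn : (k <= n)%N) (htk : (k < t)%N) (e : nat) :
  @nu R (m * n) F (@minors_gens F m n t) (p ^ e) <=
    ((m - k)%:R * (n - k)%:R) / (t - k)%:R * (p ^ e)%:R.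
Proof.
rewrite /nu.
set E := (X in sup X).
have tk0 : (0 < (t - k)%:R :> R) by rewrite ltr0n subn_gt0.
have ub : ubound E (((m - k)%:R * (n - k)%:R) / (t - k)%:R * (p ^ e)%:R).
  move=> x [r /= hr <-].
  have hle : (r * (t - k) <= (m - k) * (n - k) * (p ^ e - 1))%N.
    by rewrite leqNgt; apply/negP => h; apply: hr; exact: (alg_main hp hkm hkn h).
  rewrite mulrAC ler_pdivlMr // -!natrM ler_nat.
  by apply: leq_trans hle _; rewrite leq_mul2l leq_subr orbT.
case: (pselect (E !=set0)%classic) => [ne|E0]; first exact: (ge_sup ne ub).
have -> : E = set0%classic.
  by apply/seteqP; split => x // Ex; apply: E0; exists x.
rewrite sup0; apply: mulr_ge0; last exact: ler0n.
by apply: divr_ge0; [apply: mulr_ge0 | ]; apply: ler0n.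
Qed.

Theorem mainTheorem4 (R : realType) (F : fieldType) (p : nat)
    (hp : p \in [pchar F]) (m n t : nat)
    (ht : (0 < t)%N) (htm : (t <= m)%N) (hmn : (m <= n)%N)
    (k : nat) (hk : (k <= t - 1)%N) :
  @fpt R (m * n) F p (@minors_gens F m n t) <=
    ((m - k)%:R * (n - k)%:R) / (t - k)%:R.
Proof.
have htk : (k < t)%N by move: hk; rewrite -ltnS subn1 prednK.
have hkm : (k <= m)%N by apply: leq_trans (ltnW htk) htm.
have hkn : (k <= n)%N by apply: leq_trans hkm hmn.
set c := ((m - k)%:R * (n - k)%:R) / (t - k)%:R.
have hc0 : 0 <= c by apply: divr_ge0; [apply: mulr_ge0 | ]; apply: ler0n.
have hu : forall e, @nu R (m * n) F (@minors_gens F m n t) (p ^ e) / (p ^ e)%:R <= c.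
  move=> e; rewrite ler_pdivrMr; first exact: nu_bound.
  by rewrite ltr0n (q_gt0 hp).
rewrite /fpt.
set u := (fun e : nat => (@nu R (m * n) F (@minors_gens F m n t) (p ^ e) / (p ^ e)%:R : R)).
case: (pselect (cvgn u)) => cv.
  by apply: limr_le => //; apply: nearW => e; exact: hu.
rewrite /lim /lim_in getPN //.
by move=> l hl; apply: cv; apply: cvgP hl.
Qed.
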